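(* For $\alpha>0$ set $$H_\alpha(t)=\frac\alpha2\operatorname{sinc}^2\!\left(\frac{\alpha t}{2}\right)+\frac\alpha4\left[\operatorname{sinc}^2\!\left(\frac{\alpha t-\pi}{2}\right)+\operatorname{sinc}^2\!\left(\frac{\alpha t+\pi}{2}\right)\right]$$ and $G_\alpha(x)=\frac1\pi\int_0^\infty H_\alpha(t)\cos(tx)\,dt$ for $x\ge0$. Then $G_\alpha$ is supported on $[0,\alpha]$, $G_\alpha(0)=1$, and $H_\alpha(t)\ge\frac{2\alpha}{\max((\alpha t)^2,\pi^2/3)}$ for all $t\in\mathbb{R}$.
   Context: $\operatorname{sinc}(x)=\frac{\sin x}{x}$ for $x\ne0$ and $\operatorname{sinc}(0)=1$. *)

(* Defs.v *)
From Stdlib Require Import Reals.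
From Coquelicot Require Import Coquelicot.
Open Scope R_scope.

Definition sinc (x : R) : R := if Req_EM_T x 0 then 1 else sin x / x.

Definition H_alpha (alpha t : R) : R :=
  alpha / 2 * (sinc (alpha * t / 2)) ^ 2
  + alpha / 4 * ((sinc ((alpha * t - PI) / 2)) ^ 2 + (sinc ((alpha * t + PI) / 2)) ^ 2).

Definition G_alpha (alpha x : R) : R :=
  / PI * RInt_gen (fun t => H_alpha alpha t * cos (t * x))
                  (at_point 0) (Rbar_locally p_infty).

(* Main.v *)
Require Import Defs.
From Stdlib Require Import Reals Lra Lia.
From Coquelicot Require Import Coquelicot.
Open Scope R_scope.

Lemma sin_lb3 a : 0 <= a -> a <= 4 -> a - a^3/6 <= sin a.
Proof.
  intros H1 H2. destruct (pre_sin_bound a 0 H1 H2) as [H _].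
  unfold sin_approx, sin_term in H. simpl in H. lra.
Qed.
Lemma sin_ub5 a : 0 <= a -> a <= 4 -> sin a <= a - a^3/6 + a^5/120.
Proof.
  intros H1 H2. destruct (pre_sin_bound a 0 H1 H2) as [_ H].
  unfold sin_approx, sin_term in H. simpl in H. lra.
Qed.

Lemma sinc_0 : sinc 0 = 1.
Proof. unfold sinc; destruct (Req_EM_T 0 0); [auto|congruence]. Qed.
Lemma sinc_nz y : y <> 0 -> sinc y = sin y / y.
Proof. intros H; unfold sinc; destruct (Req_EM_T y 0); [contradiction|auto]. Qed.
Lemma sinc_opp y : sinc (-y) = sinc y.
Proof.
  destruct (Req_EM_T y 0) as [->|H]. rewrite Ropp_0; auto.
  rewrite !sinc_nz; auto. rewrite sin_neg. field. auto. lra.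
Qed.

Lemma sinc_cont y : continuous sinc y.
Proof.
  destruct (Req_EM_T y 0) as [->|H].
  - apply continuity_pt_filterlim. apply continuity_pt_locally.
    intros eps. destruct (derivable_pt_lim_sin 0 eps (cond_pos eps)) as [d Hd].
    exists d. intros u Hu.
    change (Rabs (u - 0) < d) in Hu.
    destruct (Req_EM_T u 0) as [->|Hu0]. rewrite Rminus_diag, Rabs_R0. apply cond_pos.
    rewrite sinc_nz, sinc_0 by auto.
    specialize (Hd u Hu0). rewrite Rminus_0_r in Hu. specialize (Hd Hu).
    rewrite Rplus_0_l, sin_0, cos_0, Rminus_0_r in Hd. exact Hd.
  - assert (Hc : continuous (fun z => sin z / z) y).
    { apply (ex_derive_continuous (K:=R_AbsRing) (fun z : R => sin z / z)). auto_derive. auto. }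
    assert (Hp : 0 < Rabs y) by (apply Rabs_pos_lt; auto).
    refine (continuous_ext_loc _ _ _ _ Hc).
    exists (mkposreal _ Hp). intros z Hz. change (Rabs (z - y) < Rabs y) in Hz.
    rewrite sinc_nz; auto. intros ->. rewrite Rminus_0_l, Rabs_Ropp in Hz. lra.
Qed.

Fixpoint Dk (m : nat) (u : R) : R :=
  match m with O => 1 | S m' => Dk m' u + 2 * cos (2 * INR (S m') * u) end.
Fixpoint Fk (n : nat) (u : R) : R :=
  match n with O => 0 | S n' => Fk n' u + Dk n' u end.

Lemma sin_nPI n : sin (INR n * PI) = 0.
Proof.
  induction n. simpl. rewrite Rmult_0_l; apply sin_0.
  rewrite S_INR, Rmult_plus_distr_r, Rmult_1_l, neg_sin, IHn. lra.
Qed.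

Lemma Dk_sin m u : Dk m u * sin u = sin ((2 * INR m + 1) * u).
Proof.
  induction m.
  - simpl. replace ((2 * 0 + 1) * u) with u by ring. ring.
  - change (Dk (S m) u) with (Dk m u + 2 * cos (2 * INR (S m) * u)).
    rewrite Rmult_plus_distr_r, IHm.
    set (A := 2 * INR (S m) * u).
    assert (E1 : (2 * INR (S m) + 1) * u = A + u) by (unfold A; ring).
    assert (E2 : (2 * INR m + 1) * u = A - u) by (unfold A; rewrite S_INR; ring).
    rewrite E1, E2, sin_plus, sin_minus. ring.
Qed.

Lemma Fk_sin n u : Fk n u * (sin u)^2 = (sin (INR n * u))^2.
Proof.
  induction n.
  - simpl. replace (0 * u) with 0 by ring. rewrite sin_0. ring.
  - change (Fk (S n) u) with (Fk n u + Dk n u).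
    replace ((Fk n u + Dk n u) * sin u ^ 2) with (Fk n u * sin u ^ 2 + (Dk n u * sin u) * sin u) by ring.
    rewrite IHn, Dk_sin.
    set (A := INR n * u).
    assert (E1 : INR (S n) * u = A + u) by (unfold A; rewrite S_INR; ring).
    assert (E2 : (2 * INR n + 1) * u = 2 * A + u) by (unfold A; ring).
    rewrite E1, E2, sin_plus, sin_plus, sin_2a, cos_2a.
    assert (Hu := sin2_cos2 u). unfold Rsqr in Hu.
    assert (HA := sin2_cos2 A). unfold Rsqr in HA.
    assert (D : (sin A ^ 2 + (sin A * cos u + cos A * sin u) ^ 2 * 0) = 0 + sin A ^2) by ring.
    replace ((sin A * cos u + cos A * sin u) ^ 2) with
      (sin A ^ 2 + (2 * sin A * cos A * cos u + (cos A * cos A - sin A * sin A) * sin u) * sin u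
        + sin A ^ 2 * (sin u * sin u + cos u * cos u - 1)).
    rewrite Hu. ring. ring.
Qed.

Lemma is_RInt_eq_val (f : R -> R) a b l l' : is_RInt f a b l -> l = l' -> is_RInt f a b l'.
Proof. intros H <-; exact H. Qed.

Lemma is_RInt_Dk m : is_RInt (Dk m) 0 (PI/2) (PI/2).
Proof.
  induction m.
  - simpl. replace (PI/2) with (scal (PI/2 - 0) 1) at 2.
    apply (is_RInt_const (V:=R_NormedModule)). unfold scal; simpl; unfold mult; simpl; ring.
  - assert (H2 : is_RInt (fun u => 2 * cos (2 * INR (S m) * u)) 0 (PI/2) 0).
    { set (k := INR (S m)).
      assert (Hk : 0 < k) by (unfold k; apply lt_0_INR; lia).
      assert (HR : is_RInt (fun u => 2 * cos (2 * k * u)) 0 (PI/2)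
          (minus ((fun u => sin (2 * k * u) / k) (PI/2)) ((fun u => sin (2 * k * u) / k) 0))).
      { apply (is_RInt_derive (V:=R_CompleteNormedModule) (fun u => sin (2 * k * u) / k) (fun u => 2 * cos (2 * k * u)) 0 (PI/2)).
        - intros x _. auto_derive. lra. field. lra.
        - intros x _. apply (ex_derive_continuous (K:=R_AbsRing) (fun u : R => 2 * cos (2 * k * u))). auto_derive. auto. }
      replace (minus _ _) with 0 in HR. exact HR.
      simpl. unfold minus, plus, opp; simpl.
      replace (2 * k * (PI/2)) with (INR (S m) * PI) by (unfold k; field).
      rewrite sin_nPI, Rmult_0_r, sin_0. field. lra. }
    assert (HP := is_RInt_plus _ _ _ _ _ _ IHm H2).
    apply (is_RInt_eq_val _ _ _ _ _ HP). unfold plus; simpl. ring.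
Qed.

Lemma is_RInt_Fk n : is_RInt (Fk n) 0 (PI/2) (INR n * (PI/2)).
Proof.
  induction n.
  - simpl. replace (0 * (PI/2)) with (scal (PI/2 - 0) 0).
    apply (is_RInt_const (V:=R_NormedModule)). unfold scal; simpl; unfold mult; simpl; ring.
  - assert (HP := is_RInt_plus _ _ _ _ _ _ IHn (is_RInt_Dk n)).
    apply (is_RInt_eq_val _ _ _ _ _ HP). rewrite S_INR. unfold plus; simpl. ring.
Qed.

Definition Sq (y : R) := sinc y ^ 2.

Lemma cont_mul (f g : R -> R) t : continuous f t -> continuous g t -> continuous (fun t => f t * g t) t.
Proof. intros Hf Hg. apply (continuous_mult f g t Hf Hg). Qed.
Lemma cont_plus (f g : R -> R) t : continuous f t -> continuous g t -> continuous (fun t => f t + g t) t.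
Proof. intros Hf Hg. apply (continuous_plus f g t Hf Hg). Qed.
Lemma cont_smooth (f : R -> R) t : ex_derive f t -> continuous f t.
Proof. intros H. apply (ex_derive_continuous (K:=R_AbsRing) f t H). Qed.
Lemma cont_sinc_comp (phi : R -> R) t : ex_derive phi t -> continuous (fun t => sinc (phi t)) t.
Proof. intros H. apply (continuous_comp phi sinc t). apply cont_smooth; auto. apply sinc_cont. Qed.
Lemma cont_Sq_comp (phi : R -> R) t : ex_derive phi t -> continuous (fun t => Sq (phi t)) t.
Proof.
  intros H. unfold Sq. simpl.
  apply cont_mul. apply cont_sinc_comp; auto.
  apply cont_mul. apply cont_sinc_comp; auto. apply continuous_const.
Qed.
Lemma exRI (f : R -> R) a b : (forall t, continuous f t) -> ex_RInt f a b.
Proof. intros H. apply (ex_RInt_continuous (V:=R_CompleteNormedModule)). intros; apply H. Qed.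

Lemma Sq_opp y : Sq (-y) = Sq y.
Proof. unfold Sq; rewrite sinc_opp; auto. Qed.
Lemma Sq_ge0 y : 0 <= Sq y.
Proof. unfold Sq. nra. Qed.
Lemma Sq_nz y : y <> 0 -> Sq y = sin y ^ 2 / y ^ 2.
Proof. intros H; unfold Sq; rewrite sinc_nz; auto. field; auto. Qed.
Lemma Sq_cont y : continuous Sq y.
Proof. apply (cont_Sq_comp (fun t => t)). auto_derive; auto. Qed.

Lemma PI_gt3 : 3 < PI.
Proof. assert (H := PI2_3_2). lra. Qed.

Lemma sin_le_id a : 0 <= a -> sin a <= a.
Proof.
  intros H. destruct (Rle_dec a 4).
  - assert (H1 := sin_ub5 a H r). assert (0 <= a^3 * (20 - a^2)) by (apply Rmult_le_pos; [apply pow_le; lra | nra]). lra.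
  - assert (H1 := SIN_bound a). lra.
Qed.

Lemma sin_bound_sq y : 0 <= sin y ^ 2 <= 1.
Proof. assert (H := SIN_bound y). nra. Qed.

Definition Si2 b := RInt Sq 0 b.

Lemma Fejer_pt n u : (1 <= n)%nat -> 0 < u < PI/2 ->
  Fk n u - 3 <= INR n ^ 2 * Sq (INR n * u) <= Fk n u.
Proof.
  intros Hn Hu.
  assert (Hn0 : 0 < INR n) by (apply lt_0_INR; lia).
  assert (Hpi := PI_4).
  assert (Hs0 : 0 < sin u) by (apply sin_gt_0; lra).
  assert (Hsu : sin u <= u) by (apply sin_le_id; lra).
  assert (Hsl : u - u^3/6 <= sin u) by (apply sin_lb3; lra).
  assert (HF := Fk_sin n u).
  assert (Hsn := sin_bound_sq (INR n * u)).
  rewrite Sq_nz by nra.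
  set (s := sin u) in *. set (F := Fk n u) in *. set (sn := sin (INR n * u)) in *.
  replace (INR n ^ 2 * (sn ^ 2 / (INR n * u) ^ 2)) with (sn ^ 2 / u ^ 2) by (field; lra).
  assert (Hs3 : u / 3 <= s) by nra.
  assert (Hsn2 : 0 <= sn ^ 2 <= 1) by exact Hsn.
  assert (Hs2 : 0 < s^2) by (apply pow_lt; lra).
  assert (HF0 : 0 <= F).
  { destruct (Rle_or_lt 0 F) as [h|h]; auto.
    assert (0 < (- F) * s^2) by (apply Rmult_lt_0_compat; lra). nra. }
  assert (HFs : F * s^2 <= 1) by lra.
  assert (Hu2 : 0 < u^2) by nra.
  split.
  - apply Rmult_le_reg_r with (u ^ 2); auto.
    unfold Rdiv. rewrite Rmult_assoc, Rinv_l by lra. rewrite Rmult_1_r.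
    rewrite <- HF.
    assert (Hk1 : (u - s) * (u + s) <= (u^3/6) * (2 * u)).
    { apply Rmult_le_compat; nra. }
    assert (Hk2 : (u/3) * (u/3) <= s * s) by (apply Rmult_le_compat; lra).
    assert (Hk : u^2 - s^2 <= 3 * u^2 * s^2).
    { assert (E : u^2 - s^2 = (u - s) * (u + s)) by ring. rewrite E.
      assert (3 * u^2 * ((u/3)*(u/3)) <= 3 * u^2 * (s * s)) by (apply Rmult_le_compat_l; nra).
      replace (3 * u^2 * s^2) with (3 * u^2 * (s*s)) by ring. nra. }
    assert (F * (u^2 - s^2) <= 3 * u^2) by nra.
    nra.
  - apply Rmult_le_reg_r with (u ^ 2); auto.
    unfold Rdiv. rewrite Rmult_assoc, Rinv_l by lra. rewrite Rmult_1_r.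
    rewrite <- HF. apply Rmult_le_compat_l; auto. apply pow_incr; lra.
Qed.

Lemma exRI_Sq a b : ex_RInt Sq a b.
Proof. apply exRI. apply Sq_cont. Qed.

Lemma RInt_val (f : R -> R) a b l : is_RInt f a b l -> RInt f a b = l.
Proof. intros H. apply is_RInt_unique. exact H. Qed.

Lemma RInt_scaled_Sq k b : 0 < k ->
  RInt (fun u => k ^ 2 * Sq (k * u)) 0 b = k * Si2 (k * b).
Proof.
  intros Hk. unfold Si2.
  assert (H1 := RInt_comp_lin Sq k 0 0 b (exRI_Sq _ _)).
  replace (k * 0 + 0) with 0 in H1 by ring. replace (k * b + 0) with (k * b) in H1 by ring.
  rewrite <- H1.
  rewrite <- (RInt_scal (V:=R_CompleteNormedModule)).
  - apply RInt_ext. intros x _. unfold scal; simpl; unfold mult; simpl. rewrite Rplus_0_r. ring.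
  - apply (exRI (fun y => k * Sq (k * y + 0))). intros t. apply cont_mul. apply continuous_const.
    apply (cont_Sq_comp (fun y => k * y + 0)). auto_derive; auto.
Qed.

Lemma Si2_scaled n : (1 <= n)%nat ->
  INR n * (PI/2) - 3 * (PI/2) <= INR n * Si2 (INR n * (PI/2)) <= INR n * (PI/2).
Proof.
  intros Hn.
  assert (Hpi := PI_gt3).
  assert (Hn0 : 0 < INR n) by (apply lt_0_INR; lia).
  rewrite <- RInt_scaled_Sq by auto.
  assert (Hex : ex_RInt (fun u => INR n ^ 2 * Sq (INR n * u)) 0 (PI/2)).
  { apply exRI. intros t. apply cont_mul. apply continuous_const.
    apply (cont_Sq_comp (fun y => INR n * y)). auto_derive; auto. }
  split.
  - assert (HI : is_RInt (fun u => Fk n u - 3) 0 (PI/2) (minus (INR n * (PI/2)) (scal (PI/2 - 0) 3))).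
    { apply (is_RInt_minus (V:=R_NormedModule) (Fk n) (fun _ => 3)). apply is_RInt_Fk.
      apply (is_RInt_const (V:=R_NormedModule)). }
    replace (INR n * (PI / 2) - 3 * (PI / 2)) with (RInt (fun u => Fk n u - 3) 0 (PI/2)).
    apply RInt_le. lra. eexists; exact HI. exact Hex.
    intros x Hx. apply Fejer_pt; auto.
    rewrite (RInt_val _ _ _ _ HI). unfold minus, plus, opp, scal; simpl; unfold mult; simpl. ring.
  - replace (INR n * (PI / 2)) with (RInt (Fk n) 0 (PI/2)).
    apply RInt_le. lra. exact Hex. eexists; apply is_RInt_Fk.
    intros x Hx. apply Fejer_pt; auto.
    apply RInt_val. apply is_RInt_Fk.
Qed.

Lemma Si2_mono a b : 0 <= a <= b -> Si2 a <= Si2 b.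
Proof.
  intros H. unfold Si2.
  rewrite <- (RInt_Chasles Sq 0 a b) by apply exRI_Sq.
  assert (0 <= RInt Sq a b).
  { apply RInt_ge_0. lra. apply exRI_Sq. intros; apply Sq_ge0. }
  unfold plus; simpl. lra.
Qed.

Lemma Si2_lim : is_lim Si2 p_infty (PI/2).
Proof.
  apply is_lim_spec. intros eps. simpl.
  assert (Hpi := PI_gt3).
  destruct (INR_unbounded (3 * PI / (2 * eps))) as [n Hn].
  assert (He := cond_pos eps).
  assert (Hn1 : (1 <= n)%nat).
  { destruct n. simpl in Hn. assert (0 < 3 * PI / (2 * eps)) by (apply Rdiv_lt_0_compat; lra). lra. lia. }
  assert (Hn0 : 0 < INR n) by (apply lt_0_INR; lia).
  exists (INR n * (PI/2)). intros y Hy.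
  destruct (Si2_scaled n Hn1) as [L1 _].
  assert (Hlow : PI/2 - eps < Si2 (INR n * (PI/2))).
  { assert (3 * PI / (2 * eps) * eps < INR n * eps) by (apply Rmult_lt_compat_r; lra).
    replace (3 * PI / (2 * eps) * eps) with (3 * PI / 2) in H by (field; lra).
    apply Rmult_lt_reg_l with (INR n); auto. nra. }
  assert (Hm1 : Si2 (INR n * (PI/2)) <= Si2 y) by (apply Si2_mono; nra).
  destruct (INR_unbounded (y / (PI/2))) as [m Hm].
  assert (Hm1' : (1 <= m)%nat).
  { destruct m. simpl in Hm. assert (0 < y / (PI/2)) by (apply Rdiv_lt_0_compat; nra). lra. lia. }
  assert (Hm0 : 0 < INR m) by (apply lt_0_INR; lia).
  destruct (Si2_scaled m Hm1') as [_ U1].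
  assert (Hup : Si2 (INR m * (PI/2)) <= PI/2).
  { apply Rmult_le_reg_l with (INR m); auto. }
  assert (Hm2 : Si2 y <= Si2 (INR m * (PI/2))).
  { apply Si2_mono. split. nra.
    assert (y / (PI/2) * (PI/2) <= INR m * (PI/2)) by (apply Rmult_le_compat_r; lra).
    replace (y / (PI/2) * (PI/2)) with y in H by (field; lra). exact H. }
  apply Rabs_lt_between'. lra.
Qed.

Lemma is_lim_lin_pinf k : 0 < k -> is_lim (fun b => k * b) p_infty p_infty.
Proof.
  intros Hk. apply is_lim_spec. intros M. exists (M / k). intros x Hx.
  apply Rmult_lt_compat_l with (r := k) in Hx; auto.
  replace (k * (M / k)) with M in Hx by (field; lra). exact Hx.
Qed.

Lemma is_lim_shift_pinf p : is_lim (fun b => b + p) p_infty p_infty.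
Proof.
  apply is_lim_spec. intros M. exists (M - p). intros x Hx. lra.
Qed.

Lemma LK k : is_lim (fun b => RInt (fun s => k^2 * Sq (k*s)) 0 b) p_infty (Rabs k * (PI/2)).
Proof.
  destruct (Req_EM_T k 0) as [->|Hk].
  - rewrite Rabs_R0, Rmult_0_l.
    apply (is_lim_ext (fun _ => 0)). intros b.
    rewrite (RInt_ext (V:=R_CompleteNormedModule) _ (fun _ => 0)). rewrite RInt_const. unfold scal; simpl; unfold mult; simpl; ring.
    intros x _. change (0 ^ 2 * Sq (0 * x) = 0). ring.
    apply is_lim_const.
  - assert (Hak : 0 < Rabs k) by (apply Rabs_pos_lt; auto).
    apply (is_lim_ext (fun b => Rabs k * Si2 (Rabs k * b))).
    { intros b. rewrite <- RInt_scaled_Sq by auto. apply RInt_ext. intros x _.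
      change (Rabs k ^ 2 * Sq (Rabs k * x) = k ^ 2 * Sq (k * x)).
      rewrite pow2_abs. f_equal. unfold Rabs. destruct (Rcase_abs k).
      replace (- k * x) with (- (k * x)) by ring. apply Sq_opp. auto. }
    apply (is_lim_scal_l (fun b => Si2 (Rabs k * b)) (Rabs k) p_infty (PI/2)).
    apply (is_lim_comp Si2 (fun b => Rabs k * b) p_infty (PI/2) p_infty).
    apply Si2_lim. apply is_lim_lin_pinf; auto.
    exists 0. intros; discriminate.
Qed.

Lemma iRplus (f g : R -> R) a b lf lg : is_RInt f a b lf -> is_RInt g a b lg ->
  is_RInt (fun s => f s + g s) a b (lf + lg).
Proof. intros H1 H2. exact (is_RInt_plus f g a b lf lg H1 H2). Qed.
Lemma iRminus (f g : R -> R) a b lf lg : is_RInt f a b lf -> is_RInt g a b lg ->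
  is_RInt (fun s => f s - g s) a b (lf - lg).
Proof. intros H1 H2. exact (is_RInt_minus f g a b lf lg H1 H2). Qed.
Lemma iRscal (f : R -> R) a b k lf : is_RInt f a b lf ->
  is_RInt (fun s => k * f s) a b (k * lf).
Proof. intros H1. exact (is_RInt_scal f a b k lf H1). Qed.
Lemma iRext (f g : R -> R) a b l : (forall x, Rmin a b < x < Rmax a b -> f x = g x) ->
  is_RInt f a b l -> is_RInt g a b l.
Proof. intros H1 H2. exact (is_RInt_ext f g a b l H1 H2). Qed.
Lemma iRcorr (f : R -> R) a b : (forall t, continuous f t) -> is_RInt f a b (RInt f a b).
Proof. intros H. apply (RInt_correct (V:=R_CompleteNormedModule)). apply exRI; auto. Qed.

Lemma is_lim_scalR (f : R -> R) a (l : R) : is_lim f p_infty l -> is_lim (fun y => a * f y) p_infty (a * l).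
Proof. intros H. exact (is_lim_scal_l f a p_infty l H). Qed.

Lemma kSq_eq k s : s <> 0 -> k ^ 2 * Sq (k * s) = sin (k * s) ^ 2 / s ^ 2.
Proof.
  intros Hs. destruct (Req_EM_T k 0) as [->|Hk].
  - rewrite Rmult_0_l, sin_0. field. auto.
  - rewrite Sq_nz. field. split; auto. apply Rmult_integral_contrapositive; auto.
Qed.

Lemma trig_E A B : 2 * sin A ^ 2 * cos (2 * B) = sin (A + B) ^ 2 + sin (A - B) ^ 2 - 2 * sin B ^ 2.
Proof.
  rewrite cos_2a_sin, sin_plus, sin_minus.
  assert (HA := sin2_cos2 A). assert (HB := sin2_cos2 B). unfold Rsqr in HA, HB.
  assert (E : (sin A * cos B + cos A * sin B) ^ 2 + (sin A * cos B - cos A * sin B) ^ 2 - 2 * sin B ^ 2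
     - 2 * sin A ^ 2 * (1 - 2 * sin B * sin B)
     = 2 * sin A ^ 2 * (sin B * sin B + cos B * cos B - 1) + 2 * sin B ^ 2 * (sin A * sin A + cos A * cos A - 1)) by ring.
  rewrite HA, HB in E. lra.
Qed.

Definition Ef c x s := Sq (c * s) * cos (s * x).
Definition Of c x s := Sq (c * s) * sin (s * x).

Lemma Ef_pt c x s : c <> 0 -> s <> 0 ->
  Ef c x s = / (2 * c ^ 2) * ((c + x/2) ^ 2 * Sq ((c + x/2) * s) + (c - x/2) ^ 2 * Sq ((c - x/2) * s))
             - / (c ^ 2) * ((x/2) ^ 2 * Sq ((x/2) * s)).
Proof.
  intros Hc Hs. unfold Ef. rewrite !kSq_eq by auto.
  rewrite Sq_nz by (apply Rmult_integral_contrapositive; auto).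
  assert (T := trig_E (c * s) (x / 2 * s)).
  replace (2 * (x / 2 * s)) with (s * x) in T by field.
  replace (c * s + x / 2 * s) with ((c + x/2) * s) in T by ring.
  replace (c * s - x / 2 * s) with ((c - x/2) * s) in T by ring.
  apply Rmult_eq_reg_l with (2 * c^2 * s^2).
  2:{ apply Rmult_integral_contrapositive; split; [apply Rmult_integral_contrapositive; split; [lra|] |]; apply pow_nonzero; auto. }
  field_simplify; try (split; auto). exact T.
Qed.

Definition Jv c x := / (2 * c ^ 2) * (Rabs (c + x/2) * (PI/2) + Rabs (c - x/2) * (PI/2)) - / (c ^ 2) * (Rabs (x/2) * (PI/2)).

Lemma cont_kSq k t : continuous (fun s => k ^ 2 * Sq (k * s)) t.
Proof. apply cont_mul. apply continuous_const. apply (cont_Sq_comp (fun s => k * s)). auto_derive; auto. Qed.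

Lemma E_lim c x : c <> 0 -> is_lim (fun b => RInt (Ef c x) 0 b) p_infty (Jv c x).
Proof.
  intros Hc.
  set (f1 := fun s => (c + x/2) ^ 2 * Sq ((c + x/2) * s)).
  set (f2 := fun s => (c - x/2) ^ 2 * Sq ((c - x/2) * s)).
  set (f3 := fun s => (x/2) ^ 2 * Sq ((x/2) * s)).
  apply (is_lim_ext (fun b => / (2 * c ^ 2) * (RInt f1 0 b + RInt f2 0 b) - / (c ^ 2) * RInt f3 0 b)).
  { intros b. symmetry. apply RInt_val.
    apply (iRext (fun s => / (2 * c ^ 2) * (f1 s + f2 s) - / (c ^ 2) * f3 s)).
    - intros s Hs. symmetry. apply Ef_pt; auto.
      destruct (Rle_dec 0 b). rewrite Rmin_left in Hs by auto. lra.
      rewrite Rmax_left in Hs by lra. lra.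
    - apply iRminus. apply iRscal. apply iRplus; apply iRcorr; intros; apply cont_kSq.
      apply iRscal; apply iRcorr; intros; apply cont_kSq. }
  unfold Jv. apply is_lim_minus'. apply is_lim_scalR. apply is_lim_plus'; apply LK.
  apply is_lim_scalR. apply LK.
Qed.

Lemma cont_Ef c x t : continuous (Ef c x) t.
Proof.
  unfold Ef. apply cont_mul. apply (cont_Sq_comp (fun s => c * s)). auto_derive; auto.
  apply (cont_smooth (fun s => cos (s * x))). auto_derive; auto.
Qed.
Lemma cont_Of c x t : continuous (Of c x) t.
Proof.
  unfold Of. apply cont_mul. apply (cont_Sq_comp (fun s => c * s)). auto_derive; auto.
  apply (cont_smooth (fun s => sin (s * x))). auto_derive; auto.
Qed.

Lemma RInt_lin2 (f g : R -> R) u v a b : (forall t, continuous f t) -> (forall t, continuous g t) ->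
  @eq R (RInt (fun s => u * f s + v * g s) a b) (u * RInt f a b + v * RInt g a b).
Proof.
  intros Hf Hg. apply RInt_val. apply iRplus; apply iRscal; apply iRcorr; auto.
Qed.

Lemma RInt_diff (f : R -> R) a b : (forall t, continuous f t) -> @eq R (RInt f a b) (RInt f 0 b - RInt f 0 a).
Proof.
  intros Hf. assert (H := RInt_Chasles f 0 a b (exRI f _ _ Hf) (exRI f _ _ Hf)).
  change (RInt f 0 a + RInt f a b = RInt f 0 b) in H. lra.
Qed.

Lemma Ef_even c x s : Ef c x (- s) = Ef c x s.
Proof.
  unfold Ef. replace (c * - s) with (- (c * s)) by ring. rewrite Sq_opp.
  replace (- s * x) with (- (s * x)) by ring. rewrite cos_neg. auto.
Qed.
Lemma Of_odd c x s : Of c x (- s) = - Of c x s.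
Proof.
  unfold Of. replace (c * - s) with (- (c * s)) by ring. rewrite Sq_opp.
  replace (- s * x) with (- (s * x)) by ring. rewrite sin_neg. ring.
Qed.

Lemma refl_RInt (f : R -> R) (sg : R) y : (forall t, continuous f t) -> (forall s, f (- s) = sg * f s) ->
  @eq R (RInt f 0 (- y)) (- sg * RInt f 0 y).
Proof.
  intros Hf Hs.
  assert (H1 := RInt_comp_lin f (-1) 0 0 y (exRI f _ _ Hf)).
  replace (-1 * 0 + 0) with 0 in H1 by ring. replace (-1 * y + 0) with (- y) in H1 by ring.
  rewrite <- H1.
  rewrite (RInt_ext (V:=R_CompleteNormedModule) _ (fun s => (- sg) * f s)).
  apply RInt_val. apply iRscal. apply iRcorr; auto.
  intros s _. unfold scal; simpl; unfold mult; simpl.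
  replace (-1 * s + 0) with (- s) by ring. rewrite Hs. ring.
Qed.

Definition PE c x y : R := RInt (Ef c x) 0 y.
Definition PO c x y : R := RInt (Of c x) 0 y.

Lemma PE_opp c x y : PE c x (- y) = - PE c x y.
Proof. unfold PE. rewrite (refl_RInt _ 1). ring. apply cont_Ef. intros; rewrite Ef_even; ring. Qed.
Lemma PO_opp c x y : PO c x (- y) = PO c x y.
Proof. unfold PO. rewrite (refl_RInt _ (-1)). ring. apply cont_Of. intros; rewrite Of_odd; ring. Qed.

Lemma I1_eq c x p b : @eq R (RInt (fun t => Sq (c * (t - p)) * cos (t * x)) 0 b)
  (cos (p * x) * (PE c x (b - p) - PE c x (- p)) - sin (p * x) * (PO c x (b - p) - PO c x (- p))).
Proof.
  set (g := fun s => cos (p * x) * Ef c x s + (- sin (p * x)) * Of c x s).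
  assert (Hg : forall t, continuous g t).
  { intros t. apply cont_plus; apply cont_mul; try apply continuous_const. apply cont_Ef. apply cont_Of. }
  assert (H1 := RInt_comp_lin g 1 (- p) 0 b (exRI g _ _ Hg)).
  replace (1 * 0 + - p) with (- p) in H1 by ring. replace (1 * b + - p) with (b - p) in H1 by ring.
  rewrite (RInt_ext (V:=R_CompleteNormedModule) _ (fun y => scal 1 (g (1 * y + - p)))).
  etransitivity. apply H1. unfold g. rewrite RInt_lin2 by (apply cont_Ef || apply cont_Of).
  rewrite (RInt_diff (Ef c x)), (RInt_diff (Of c x)) by (apply cont_Ef || apply cont_Of).
  unfold PE, PO. ring.
  intros t _. unfold scal; simpl; unfold mult; simpl. unfold g, Ef, Of.
  replace (1 * t + - p) with (t - p) by ring.
  replace (t * x) with ((t - p) * x + p * x) by ring. rewrite cos_plus. ring.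
Qed.

Lemma I2_eq c x p b : @eq R (RInt (fun t => Sq (c * (t + p)) * cos (t * x)) 0 b)
  (cos (p * x) * (PE c x (b + p) - PE c x p) + sin (p * x) * (PO c x (b + p) - PO c x p)).
Proof.
  set (g := fun s => cos (p * x) * Ef c x s + sin (p * x) * Of c x s).
  assert (Hg : forall t, continuous g t).
  { intros t. apply cont_plus; apply cont_mul; try apply continuous_const. apply cont_Ef. apply cont_Of. }
  assert (H1 := RInt_comp_lin g 1 p 0 b (exRI g _ _ Hg)).
  replace (1 * 0 + p) with p in H1 by ring. replace (1 * b + p) with (b + p) in H1 by ring.
  rewrite (RInt_ext (V:=R_CompleteNormedModule) _ (fun y => scal 1 (g (1 * y + p)))).
  etransitivity. apply H1. unfold g. rewrite RInt_lin2 by (apply cont_Ef || apply cont_Of).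
  rewrite (RInt_diff (Ef c x)), (RInt_diff (Of c x)) by (apply cont_Ef || apply cont_Of).
  unfold PE, PO. ring.
  intros t _. unfold scal; simpl; unfold mult; simpl. unfold g, Ef, Of.
  replace (1 * t + p) with (t + p) by ring.
  replace (t * x) with ((t + p) * x - p * x) by ring. rewrite cos_minus. ring.
Qed.

Lemma Sq_le_inv y : y <> 0 -> Sq y <= / y ^ 2.
Proof.
  intros H. rewrite Sq_nz by auto. assert (Hs := sin_bound_sq y).
  assert (0 < y ^ 2) by (apply pow_lt_0_compat || nra).
  unfold Rdiv. apply Rmult_le_reg_l with (y^2); auto.
  rewrite <- Rmult_assoc, (Rmult_comm (y^2)), Rmult_assoc, Rinv_r by lra. lra.
Qed.

Lemma PO_diff_lim c x p : 0 < c -> 0 < p -> is_lim (fun b => PO c x (b + p) - PO c x (b - p)) p_infty 0.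
Proof.
  intros Hc Hp. apply is_lim_spec. intros eps. simpl. assert (He := cond_pos eps).
  assert (Hc2 : 0 < c ^ 2) by (apply pow_lt; auto).
  exists (p + 1 + 2 * p / (c ^ 2 * eps)). intros b Hb.
  assert (Hq : 0 < 2 * p / (c ^ 2 * eps)).
  { apply Rdiv_lt_0_compat. lra. apply Rmult_lt_0_compat; lra. }
  unfold PO. rewrite Rminus_0_r. rewrite <- (RInt_diff (Of c x)) by apply cont_Of.
  set (d := b - p).
  assert (Hd : 1 <= d) by (unfold d; lra).
  assert (Hb1 := abs_RInt_le_const (Of c x) (b - p) (b + p) (/ (c ^ 2 * d ^ 2))).
  assert (Hd2 : 0 < d ^ 2) by (apply pow_lt; lra).
  eapply Rle_lt_trans. apply Hb1. lra. apply exRI; apply cont_Of.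
  - intros t Ht. unfold Of. rewrite Rabs_mult.
    assert (Hs := SIN_bound (t * x)).
    assert (Ht0 : 0 < c * t) by (apply Rmult_lt_0_compat; unfold d in *; lra).
    assert (HS := Sq_le_inv (c * t) ltac:(lra)).
    assert (HS0 := Sq_ge0 (c * t)).
    rewrite Rabs_right by lra.
    assert (Rabs (sin (t * x)) <= 1) by (apply Rabs_le; lra).
    apply Rle_trans with (Sq (c * t)). 
    { rewrite <- (Rmult_1_r (Sq (c * t))) at 2. apply Rmult_le_compat_l; auto. }
    apply Rle_trans with (/ (c * t) ^ 2); auto.
    apply Rinv_le_contravar. apply Rmult_lt_0_compat; auto.
    rewrite Rpow_mult_distr. apply Rmult_le_compat_l. lra. apply pow_incr. unfold d in *; lra.
  - replace (b + p - (b - p)) with (2 * p) by ring.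
    assert (Hdd : d <= d ^ 2) by nra.
    assert (E1 : 2 * p * / (c ^ 2 * d ^ 2) <= 2 * p / (c ^ 2 * d)).
    { unfold Rdiv. apply Rmult_le_compat_l. lra. apply Rinv_le_contravar.
      apply Rmult_lt_0_compat; lra. apply Rmult_le_compat_l; lra. }
    eapply Rle_lt_trans. apply E1.
    apply Rmult_lt_reg_r with (c ^ 2 * d). apply Rmult_lt_0_compat; lra.
    unfold Rdiv. rewrite Rmult_assoc, Rinv_l by (apply Rgt_not_eq, Rmult_lt_0_compat; lra).
    rewrite Rmult_1_r.
    assert (2 * p / (c ^ 2 * eps) < d) by (unfold d; lra).
    apply Rmult_lt_compat_r with (r := c ^ 2 * eps) in H; [| apply Rmult_lt_0_compat; lra].
    unfold Rdiv in H. rewrite Rmult_assoc, Rinv_l in H by (apply Rgt_not_eq, Rmult_lt_0_compat; lra).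
    nra.
Qed.


Lemma lim_to_gen (f : R -> R) (l : R) : (forall t, continuous f t) ->
  is_lim (fun b => RInt f 0 b) p_infty l ->
  is_RInt_gen f (at_point 0) (Rbar_locally p_infty) l.
Proof.
  intros Hf Hl P HP.
  assert (H2 : Rbar_locally p_infty (fun b => P (RInt f 0 b))).
  { apply Hl. exact HP. }
  apply (Filter_prod _ _ _ (fun a => a = 0) (fun b => P (RInt f 0 b))).
  - reflexivity.
  - exact H2.
  - intros a b Ha Hb. simpl in Ha. subst a. exists (RInt f 0 b). split; auto.
    apply iRcorr; auto.
Qed.

Lemma PE_shift_lim c x q : c <> 0 -> is_lim (fun b => PE c x (b + q)) p_infty (Jv c x).
Proof.
  intros Hc. apply (is_lim_comp (PE c x) (fun b => b + q) p_infty (Jv c x) p_infty).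
  apply E_lim; auto. apply is_lim_shift_pinf. exists 0. intros; discriminate.
Qed.

Lemma cont_H alpha x t : continuous (fun t => H_alpha alpha t * cos (t * x)) t.
Proof.
  unfold H_alpha. apply cont_mul; [| apply (cont_smooth (fun t => cos (t * x))); auto_derive; auto].
  apply cont_plus. apply cont_mul. apply continuous_const.
  apply (cont_Sq_comp (fun t => alpha * t / 2)). auto_derive; auto.
  apply cont_mul. apply continuous_const. apply cont_plus.
  apply (cont_Sq_comp (fun t => (alpha * t - PI) / 2)). auto_derive; auto.
  apply (cont_Sq_comp (fun t => (alpha * t + PI) / 2)). auto_derive; auto.
Qed.

Lemma H_decomp alpha x t : 0 < alpha ->
  H_alpha alpha t * cos (t * x) =
  alpha / 2 * Ef (alpha/2) x t + alpha / 4 * (Sq (alpha/2 * (t - PI/alpha)) * cos (t * x)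
     + Sq (alpha/2 * (t + PI/alpha)) * cos (t * x)).
Proof.
  intros Ha. unfold H_alpha, Ef, Sq.
  replace (alpha * t / 2) with (alpha / 2 * t) by field.
  replace ((alpha * t - PI) / 2) with (alpha / 2 * (t - PI / alpha)) by (field; lra).
  replace ((alpha * t + PI) / 2) with (alpha / 2 * (t + PI / alpha)) by (field; lra).
  ring.
Qed.

Lemma main_lim alpha x : 0 < alpha ->
  is_lim (fun b => RInt (fun t => H_alpha alpha t * cos (t * x)) 0 b) p_infty
    (alpha / 2 * Jv (alpha/2) x + alpha / 4 * (cos (PI/alpha * x) * (Jv (alpha/2) x + Jv (alpha/2) x) + sin (PI/alpha * x) * 0)).
Proof.
  intros Ha. set (c := alpha/2). set (p := PI/alpha).
  assert (Hc : 0 < c) by (unfold c; lra).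
  assert (Hp : 0 < p) by (unfold p; apply Rdiv_lt_0_compat; [assert (H := PI_gt3); lra | lra]).
  apply (is_lim_ext (fun b => alpha / 2 * PE c x b + alpha / 4 * (cos (p * x) * (PE c x (b + - p) + PE c x (b + p))
      + sin (p * x) * (PO c x (b + p) - PO c x (b - p))))).
  - intros b. symmetry.
    rewrite (RInt_ext (V:=R_CompleteNormedModule) _ (fun t => alpha / 2 * Ef c x t + alpha / 4 * (Sq (c * (t - p)) * cos (t * x)
     + Sq (c * (t + p)) * cos (t * x)))).
    2:{ intros t _. unfold c, p. apply H_decomp; auto. }
    assert (Hg1 : forall t, continuous (fun t => Sq (c * (t - p)) * cos (t * x)) t).
    { intros t. apply cont_mul. apply (cont_Sq_comp (fun t => c * (t - p))). auto_derive; auto.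
      apply (cont_smooth (fun t => cos (t * x))). auto_derive; auto. }
    assert (Hg2 : forall t, continuous (fun t => Sq (c * (t + p)) * cos (t * x)) t).
    { intros t. apply cont_mul. apply (cont_Sq_comp (fun t => c * (t + p))). auto_derive; auto.
      apply (cont_smooth (fun t => cos (t * x))). auto_derive; auto. }
    rewrite RInt_lin2; [| apply cont_Ef | intros t; apply cont_plus; auto].
    rewrite (RInt_val _ _ _ _ (iRplus _ _ _ _ _ _ (iRcorr _ 0 b Hg1) (iRcorr _ 0 b Hg2))).
    rewrite I1_eq, I2_eq, PE_opp, PO_opp.
    replace (b + - p) with (b - p) by ring. unfold PE. ring.
  - apply is_lim_plus'. apply is_lim_scalR. apply E_lim; lra.
    apply is_lim_scalR. apply is_lim_plus'. apply is_lim_scalR. apply is_lim_plus'; apply PE_shift_lim; lra.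
    apply is_lim_scalR. apply PO_diff_lim; auto.
Qed.

Lemma gen_main alpha x : 0 < alpha ->
  is_RInt_gen (fun t => H_alpha alpha t * cos (t * x)) (at_point 0) (Rbar_locally p_infty)
    (alpha / 2 * Jv (alpha/2) x + alpha / 4 * (cos (PI/alpha * x) * (Jv (alpha/2) x + Jv (alpha/2) x) + sin (PI/alpha * x) * 0)).
Proof.
  intros Ha. apply lim_to_gen. intros; apply cont_H. apply main_lim; auto.
Qed.

Lemma Q_nonneg v A : 0 <= v -> 3 * v <= A -> 9/4 <= A -> A <= 4 ->
  0 <= A^2 - 2*A + v * (1 - A^2/3) + v^2 * A^2 / 36.
Proof.
  intros H1 H2 H3 H4.
  assert (HA : 0 <= A * (- (A^2 - 9*A + 15)) / 9).
  { apply Rmult_le_pos. apply Rmult_le_pos. lra. nra. lra. }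
  assert (Hc : v * (1 - A^2/3) >= (A/3) * (1 - A^2/3)).
  { assert (1 - A^2/3 <= 0) by nra. nra. }
  assert (0 <= v^2 * A^2 / 36) by (apply Rmult_le_pos; [nra|lra]).
  nra.
Qed.

Lemma sq_lb_aux r : 0 <= r -> r^2 <= 6 -> r - r^3/6 <= sin r -> r^2 * (1 - r^2/6)^2 <= sin r ^ 2.
Proof.
  intros H1 H2 H3.
  assert (0 <= r - r ^ 3 / 6).
  { replace (r - r ^ 3 / 6) with (r * (1 - r ^ 2 / 6)) by field. apply Rmult_le_pos; lra. }
  replace (r ^ 2 * (1 - r ^ 2 / 6) ^ 2) with ((r - r ^ 3 / 6) ^ 2) by field.
  apply pow_incr. lra.
Qed.

Lemma small_case u : u <> 0 -> u ^ 2 < (PI/2)^2 / 3 ->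
  Sq u + / 2 * (Sq (u - PI/2) + Sq (u + PI/2)) >= 3 / (PI/2)^2.
Proof.
  intros Hu Hv.
  assert (Hpi := PI_gt3). assert (Hpi4 := PI_4).
  set (a := PI/2) in *. set (A := a^2) in *. set (v := u^2) in *.
  assert (Ha : 3/2 < a) by (unfold a; lra).
  assert (HA1 : 9/4 <= A) by (unfold A; nra).
  assert (HA2 : A <= 4) by (unfold A, a; nra).
  assert (Hv0 : 0 < v) by (unfold v; apply pow2_gt_0; auto).
  assert (Hsa : sin a = 1) by apply sin_PI2.
  assert (Hca : cos a = 0) by apply cos_PI2.
  assert (Hum : u - a <> 0).
  { intros H. assert (u = a) by lra. unfold v in Hv. subst u. unfold A in *. nra. }
  assert (Hup : u + a <> 0).
  { intros H. assert (u = - a) by lra. unfold v in Hv. subst u. unfold A in *. nra. }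
  rewrite !Sq_nz by auto.
  rewrite sin_minus, sin_plus, Hsa, Hca.
  replace (sin u * 0 - cos u * 1) with (- cos u) by ring.
  replace (sin u * 0 + cos u * 1) with (cos u) by ring.
  assert (Hsc := sin2_cos2 u). unfold Rsqr in Hsc.
  set (s := sin u ^ 2).
  assert (Hco : (- cos u) ^ 2 = 1 - s) by (unfold s; nra).
  assert (Hco' : (cos u) ^ 2 = 1 - s) by (unfold s; nra).
  rewrite Hco, Hco'.
  assert (HAv : 0 < A - v) by lra.
  set (g := (v + A) / (A - v) ^ 2).
  assert (Hg : g * (A - v) ^ 2 = v + A) by (unfold g; field; lra).
  assert (Hpq : (u - a) ^ 2 * (u + a) ^ 2 = (A - v) ^ 2) by (unfold A, v; ring).
  assert (Hsum : / 2 * ((1 - s) / (u - a) ^ 2 + (1 - s) / (u + a) ^ 2) = (1 - s) * g).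
  { unfold g. replace (v + A) with ((u^2 + a^2)) by (unfold v, A; ring).
    replace (A - v) with (a^2 - u^2) by (unfold v, A; ring).
    field. repeat split; auto. intros H.
    assert ((u - a) * (u + a) = 0) by (replace ((u - a) * (u + a)) with (u^2 - a^2) by ring; lra).
    apply Rmult_integral in H0. tauto. }
  rewrite Hsum. fold v. fold s.
  assert (Hau : Rabs u <= 4).
  { assert (Rabs u ^ 2 < 4) by (rewrite pow2_abs; fold v; lra).
    assert (0 <= Rabs u) by apply Rabs_pos. nra. }
  assert (Hsl := sin_lb3 (Rabs u) (Rabs_pos u) Hau).
  assert (Hs : v * (1 - v/6) ^ 2 <= s).
  { unfold s, v. replace (sin u ^ 2) with (sin (Rabs u) ^ 2).
    2:{ unfold Rabs. destruct (Rcase_abs u). rewrite sin_neg. ring. auto. }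
    replace (u ^ 2) with (Rabs u ^ 2) by (apply pow2_abs).
    apply sq_lb_aux; auto. apply Rabs_pos. rewrite pow2_abs; fold v; lra. }
  set (L := v * (1 - v/6) ^ 2) in *.
  assert (Hgv : g * v <= 1).
  { apply Rmult_le_reg_r with ((A - v) ^ 2). apply pow_lt; lra.
    replace (g * v * (A - v) ^ 2) with (v * (g * (A - v) ^ 2)) by ring. rewrite Hg. nra. }
  assert (Hg0 : 0 <= g) by (unfold g; apply Rdiv_le_0_compat; [lra | apply pow_lt; lra]).
  assert (Hstep : s / v + (1 - s) * g >= (1 - v/6)^2 + (1 - L) * g).
  { assert (E1 : s / v + (1 - s) * g = g + s * (/ v - g)) by (field; lra).
    assert (E2 : (1 - v/6)^2 + (1 - L) * g = g + L * (/ v - g)) by (unfold L; field; lra).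
    rewrite E1, E2.
    assert (0 <= / v - g).
    { apply Rmult_le_reg_r with v; auto. rewrite Rmult_minus_distr_r, Rinv_l by lra. lra. }
    assert (L * (/ v - g) <= s * (/ v - g)) by (apply Rmult_le_compat_r; auto). lra. }
  assert (HP : (1 - v/6)^2 + (1 - L) * g >= 3 / A).
  { assert (HQ := Q_nonneg v A ltac:(lra) ltac:(lra) HA1 HA2).
    assert (HPp : 0 <= (A - 3 * v) * (A^2 - 2*A + v * (1 - A^2/3) + v^2 * A^2 / 36))
      by (apply Rmult_le_pos; lra).
    assert (Hm : 0 < A * (A - v) ^ 2) by (apply Rmult_lt_0_compat; [lra | apply pow_lt; lra]).
    apply Rle_ge. apply Rmult_le_reg_r with (A * (A - v) ^ 2); auto.
    replace ((1 - v / 6) ^ 2 + (1 - L) * g) with ((1 - v/6)^2 + (1 - L) * g) by ring.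
    replace (((1 - v / 6) ^ 2 + (1 - L) * g) * (A * (A - v) ^ 2))
      with (A * (A - v) ^ 2 * (1 - v/6)^2 + A * (1 - L) * (g * (A - v) ^ 2)) by ring.
    rewrite Hg. replace (3 / A * (A * (A - v) ^ 2)) with (3 * (A - v) ^ 2) by (field; lra).
    unfold L.
    assert (E : A * (A - v) ^ 2 * (1 - v / 6) ^ 2 + A * (1 - v * (1 - v / 6) ^ 2) * (v + A) - 3 * (A - v) ^ 2
       = (A - 3 * v) * (A^2 - 2*A + v * (1 - A^2/3) + v^2 * A^2 / 36)) by field.
    lra. }
  eapply Rge_trans; [exact Hstep | exact HP].
Qed.

Lemma Sq_a : Sq (PI/2) = / (PI/2)^2.
Proof.
  assert (Hpi := PI_gt3). rewrite Sq_nz by lra. rewrite sin_PI2. field. lra.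
Qed.

Lemma large_case u : (PI/2)^2 / 3 <= u ^ 2 ->
  Sq u + / 2 * (Sq (u - PI/2) + Sq (u + PI/2)) >= / u ^ 2.
Proof.
  intros Hv. assert (Hpi := PI_gt3).
  set (a := PI/2) in *.
  assert (Ha : 3/2 < a) by (unfold a; lra).
  assert (Hu : u <> 0) by (intros ->; nra).
  assert (Hv0 : 0 < u ^ 2) by (apply pow2_gt_0; auto).
  assert (G1 := Sq_ge0 (u - a)). assert (G2 := Sq_ge0 (u + a)).
  destruct (Req_EM_T u a) as [->|Hna].
  - replace (a - a) with 0 by ring. unfold Sq at 2. rewrite sinc_0. unfold a in *. rewrite Sq_a.
    assert (G3 := Sq_ge0 (PI/2 + PI/2)). rewrite pow1. lra.
  - destruct (Req_EM_T u (- a)) as [->|Hnb].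
    + replace (- a + a) with 0 by ring. unfold Sq at 3. rewrite sinc_0. rewrite Sq_opp. unfold a. rewrite Sq_a.
      replace ((- (PI/2)) ^ 2) with ((PI/2)^2) by ring.
      assert (G3 := Sq_ge0 (- (PI/2) - PI/2)). rewrite pow1. lra.
    + assert (Hum : u - a <> 0) by lra. assert (Hup : u + a <> 0) by lra.
      rewrite !Sq_nz by auto.
      rewrite sin_minus, sin_plus. unfold a. rewrite sin_PI2, cos_PI2. fold a.
      replace (sin u * 0 - cos u * 1) with (- cos u) by ring.
      replace (sin u * 0 + cos u * 1) with (cos u) by ring.
      replace ((- cos u) ^ 2) with (cos u ^ 2) by ring.
      assert (Hsc := sin2_cos2 u). unfold Rsqr in Hsc.
      assert (HP : 0 < (u - a) ^ 2) by (apply pow2_gt_0; auto).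
      assert (HQ : 0 < (u + a) ^ 2) by (apply pow2_gt_0; auto).
      assert (Key : / (u - a) ^ 2 + / (u + a) ^ 2 >= 2 / u ^ 2).
      { apply Rle_ge.
        assert (E : / (u - a) ^ 2 + / (u + a) ^ 2 - 2 / u ^ 2 =
           (u^2 * ((u+a)^2 + (u-a)^2) - 2 * (u-a)^2 * (u+a)^2) / (u^2 * (u-a)^2 * (u+a)^2))
          by (field; auto).
        assert (0 <= (u^2 * ((u+a)^2 + (u-a)^2) - 2 * (u-a)^2 * (u+a)^2) / (u^2 * (u-a)^2 * (u+a)^2)).
        { apply Rdiv_le_0_compat.
          replace (u^2 * ((u+a)^2 + (u-a)^2) - 2 * (u-a)^2 * (u+a)^2) with (2 * a^2 * (3 * u^2 - a^2)) by ring.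
          apply Rmult_le_pos. nra. lra.
          apply Rmult_lt_0_compat; auto. apply Rmult_lt_0_compat; auto. }
        lra. }
      assert (C0 : 0 <= cos u ^ 2) by nra.
      assert (E2 : / 2 * (cos u ^ 2 / (u - a) ^ 2 + cos u ^ 2 / (u + a) ^ 2)
                   = cos u ^ 2 * (/ 2 * (/ (u - a) ^ 2 + / (u + a) ^ 2))) by (field; auto).
      rewrite E2.
      assert (cos u ^ 2 * (/ 2 * (/ (u - a) ^ 2 + / (u + a) ^ 2)) >= cos u ^ 2 * / u ^ 2).
      { apply Rle_ge. apply Rmult_le_compat_l; auto.
        replace (/ u ^ 2) with (/ 2 * (2 / u ^ 2)) by (field; auto). lra. }
      assert (E3 : sin u ^ 2 / u ^ 2 + cos u ^ 2 * / u ^ 2 = / u ^ 2).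
      { field_simplify; auto. replace (sin u ^ 2 + cos u ^ 2) with 1 by nra. auto. }
      lra.
Qed.

Lemma H_Sq alpha t : 0 < alpha ->
  H_alpha alpha t = alpha / 2 * (Sq (alpha * t / 2) + / 2 * (Sq (alpha * t / 2 - PI/2) + Sq (alpha * t / 2 + PI/2))).
Proof.
  intros Ha. unfold H_alpha, Sq.
  replace ((alpha * t - PI) / 2) with (alpha * t / 2 - PI / 2) by field.
  replace ((alpha * t + PI) / 2) with (alpha * t / 2 + PI / 2) by field.
  field.
Qed.

Lemma H_lower alpha t : 0 < alpha -> H_alpha alpha t >= 2 * alpha / Rmax ((alpha * t) ^ 2) (PI ^ 2 / 3).
Proof.
  intros Ha. rewrite H_Sq by auto. assert (Hpi := PI_gt3).
  set (u := alpha * t / 2).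
  assert (Hat : (alpha * t) ^ 2 = 4 * u ^ 2) by (unfold u; field).
  rewrite Hat. unfold Rmax. destruct (Rle_dec (4 * u ^ 2) (PI ^ 2 / 3)) as [Hle|Hgt].
  -
    assert (B : Sq u + / 2 * (Sq (u - PI / 2) + Sq (u + PI / 2)) >= 3 / (PI/2)^2).
    { destruct (Req_EM_T u 0) as [->|Hu0].
      + replace (0 - PI/2) with (- (PI/2)) by ring. replace (0 + PI/2) with (PI/2) by ring.
        rewrite Sq_opp, Sq_a. unfold Sq at 1. rewrite sinc_0.
        assert (0 < (PI/2)^2) by nra.
        apply Rle_ge. apply Rmult_le_reg_r with ((PI/2)^2); auto.
        field_simplify; try lra. nra.
      + destruct (Req_EM_T (4 * u ^ 2) (PI ^ 2 / 3)) as [Heq|Hne].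
        * assert (B := large_case u ltac:(lra)).
          assert (Eu : u ^ 2 = (PI/2)^2/3) by (replace ((PI/2)^2/3) with (PI^2/3/4) by field; lra).
          replace (3 / (PI/2)^2) with (/ u^2) by (rewrite Eu; field; lra). exact B.
        * apply small_case; auto. lra. }
    assert (HP2 : 0 < PI ^ 2 / 3) by nra.
    replace (2 * alpha / (PI ^ 2 / 3)) with (alpha / 2 * (3 / (PI / 2) ^ 2)) by (field; lra).
    apply Rle_ge. apply Rmult_le_compat_l. lra. lra.
  - assert (B := large_case u ltac:(lra)).
    assert (Hu : 0 < u ^ 2) by nra.
    assert (Hu0 : u <> 0) by (intro H0; rewrite H0 in Hu; lra).
    replace (2 * alpha / (4 * u ^ 2)) with (alpha / 2 * / u ^ 2) by (field; auto).
    apply Rle_ge. apply Rmult_le_compat_l. lra. lra.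
Qed.

Lemma Jv_big c x : 0 < c -> 2 * c < x -> Jv c x = 0.
Proof.
  intros Hc Hx. unfold Jv.
  rewrite (Rabs_right (c + x/2)) by lra. rewrite (Rabs_left1 (c - x/2)) by lra.
  rewrite (Rabs_right (x/2)) by lra. field. lra.
Qed.

Lemma Jv_zero c : 0 < c -> Jv c 0 = PI / (2 * c).
Proof.
  intros Hc. unfold Jv. replace (0/2) with 0 by field.
  rewrite Rplus_0_r, Rminus_0_r, Rabs_R0, (Rabs_right c) by lra. field. lra.
Qed.

Theorem lemmaA2 (alpha : R) (halpha : 0 < alpha) :
  (forall x : R, 0 <= x ->
     ex_RInt_gen (fun t => H_alpha alpha t * cos (t * x))
                 (at_point 0) (Rbar_locally p_infty)) /\
  (forall x : R, alpha < x -> G_alpha alpha x = 0) /\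
  G_alpha alpha 0 = 1 /\
  (forall t : R, H_alpha alpha t >= 2 * alpha / Rmax ((alpha * t) ^ 2) (PI ^ 2 / 3)).
Proof.
  assert (Hpi := PI_gt3).
  split; [|split; [|split]].
  - intros x _. eexists. apply gen_main; auto.
  - intros x Hx. unfold G_alpha.
    rewrite (is_RInt_gen_unique _ _ (gen_main alpha x halpha)).
    rewrite Jv_big by lra. ring.
  - unfold G_alpha.
    rewrite (is_RInt_gen_unique _ _ (gen_main alpha 0 halpha)).
    rewrite Jv_zero by lra. rewrite Rmult_0_r, cos_0, sin_0. field. split; lra.
  - intros t. apply H_lower; auto.
Qed.
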